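(* Let $X$, $Y$, $(Z,d)$ be metric spaces, $1\le\alpha<\omega_1$, and let $f\colon X\times Y\to Z$ satisfy: (1) the family $\{f^x:x\in X\}\subseteq Z^Y$ has (PECP); (2) for every $y\in Y$ the section $f_y\colon X\to Z$ is of Borel class $\alpha$. Then $f$ is of Borel class $\alpha$.
   Context: For $x\in X$, $y\in Y$: $f^x\colon Y\to Z$, $f^x(y)=f(x,y)$ and $f_y\colon X\to Z$, $f_y(x)=f(x,y)$. A family $\mathscr F\subseteq Z^Y$ has (PECP) if for every nonempty closed $F\subseteq Y$ there is a point $y_0\in F$ such that for every $\varepsilon>0$ there is a neighborhood $U$ of $y_0$ with $d(g(y),g(y_0))<\varepsilon$ for all $y\in U\cap F$ and all $g\in\mathscr F$. In a metric space, sets of additive class $0$ are the open sets, of multiplicative class $0$ the closed sets; for $\alpha\ge1$, sets of additive class $\alpha$ are countable unions of sets of multiplicative classes $<\alpha$, and multiplicative class $\alpha$ sets are complements of additive class $\alpha$ sets. A function between metric spaces is of Borel class $\alpha$ if the preimage of every open set is of additive class $\alpha$. *)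

(* Defs.v *)
From Stdlib Require Import Reals Classical FunctionalExtensionality.
Open Scope R_scope.
Set Implicit Arguments.

Record metric_space := MetricSpace {
  mcarrier :> Type;
  mdist : mcarrier -> mcarrier -> R;
  mdist_refl : forall x, mdist x x = 0;
  mdist_sep : forall x y, mdist x y = 0 -> x = y;
  mdist_sym : forall x y, mdist x y = mdist y x;
  mdist_tri : forall x y z, mdist x z <= mdist x y + mdist y z
}.

Arguments mdist {m}.

Definition nbhd {X : metric_space} (x : X) (U : X -> Prop) : Prop :=
  exists e, 0 < e /\ forall y, mdist x y < e -> U y.

Definition open_in (X : metric_space) (U : X -> Prop) : Prop :=
  forall x, U x -> nbhd x U.

Definition closed_in (X : metric_space) (F : X -> Prop) : Prop :=
  open_in X (fun x => ~ F x).

(** Open sets of the product X x Y (product topology, i.e. the topology of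
    the max metric). *)
Definition prod_open (X Y : metric_space) (W : X * Y -> Prop) : Prop :=
  forall x y, W (x, y) -> exists e, 0 < e /\
    forall x' y', mdist x x' < e -> mdist y y' < e -> W (x', y').

(** * Countable ordinals as Brouwer trees
    [BL f] denotes the supremum of the ordinals [f n]. Every countable
    ordinal is the value of some tree. *)
Inductive bord : Type :=
| BZ : bord
| BS : bord -> bord
| BL : (nat -> bord) -> bord.

Inductive ord_le : bord -> bord -> Prop :=
| ole_zero b : ord_le BZ b
| ole_succ a b : ord_le a b -> ord_le (BS a) (BS b)
| ole_cocone a f n : ord_le a (f n) -> ord_le a (BL f)
| ole_limit f b : (forall n, ord_le (f n) b) -> ord_le (BL f) b.

Definition ord_lt (a b : bord) : Prop := ord_le (BS a) b.

Inductive additive_class {T : Type} (opn : (T -> Prop) -> Prop)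
  : bord -> (T -> Prop) -> Prop :=
| add_class_zero a (A : T -> Prop) :
    ord_le a BZ -> opn A -> additive_class opn a A
| add_class_union a (A : T -> Prop) (An : nat -> T -> Prop) (b : nat -> bord) :
    ord_lt BZ a ->
    (forall n, ord_lt (b n) a) ->
    (forall n, additive_class opn (b n) (fun x => ~ An n x)) ->
    (forall x, A x <-> exists n, An n x) ->
    additive_class opn a A.

Definition multiplicative_class {T : Type} (opn : (T -> Prop) -> Prop)
  (a : bord) (A : T -> Prop) : Prop :=
  additive_class opn a (fun x => ~ A x).

Definition borel_class {S : Type} (opnS : (S -> Prop) -> Prop)
  (Z : metric_space) (a : bord) (f : S -> Z) : Prop :=
  forall U : Z -> Prop, open_in Z U ->
    additive_class opnS a (fun s => U (f s)).

Definition PECP {Y Z : metric_space} (fam : (Y -> Z) -> Prop) : Prop :=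
  forall F : Y -> Prop, (exists y, F y) -> closed_in Y F ->
    exists y0, F y0 /\
      forall eps, 0 < eps ->
        exists U, nbhd y0 U /\
          forall y g, U y -> F y -> fam g -> mdist (g y) (g y0) < eps.

(* Main.v *)
Require Import Defs.
From Stdlib Require Import Reals.
From Stdlib Require Import Classical.
From mathcomp Require ssreflect ssrbool eqtype boolp wochoice.
Module WO.
Import ssreflect ssrbool eqtype boolp wochoice.
Lemma wo_exists (T : Type) : exists lt : T -> T -> Prop,
  well_founded lt /\ (forall a b, a <> b -> lt a b \/ lt b a).
Proof.
have [R wR] := well_ordering_principle {classic T}.
have mn : forall a b : {classic T}, R a b \/ R b a.
  move=> a b.
  have [|z [[Hz Hm] _]] := wR (fun x => `[< x = a \/ x = b >]).
    by exists a; rewrite unfold_in; apply/asboolP; left.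
  rewrite unfold_in in Hz; move/asboolP: Hz => [Ez|Ez]; subst z.
    by left; apply: Hm; rewrite unfold_in; apply/asboolP; right.
  by right; apply: Hm; rewrite unfold_in; apply/asboolP; left.
have anti : forall a b : {classic T}, R a b -> R b a -> a = b.
  move=> a b Hab Hba.
  have [|z [_ Hu]] := wR (fun x => `[< x = a \/ x = b >]).
    by exists a; rewrite unfold_in; apply/asboolP; left.
  have h1 := Hu a; have h2 := Hu b.
  rewrite -h1. rewrite -h2 //.
  - split; first by rewrite unfold_in; apply/asboolP; right.
    move=> x; rewrite unfold_in => /asboolP [->|->] //; first [by case: (mn a a) | by case: (mn b b)].
  - split; first by rewrite unfold_in; apply/asboolP; left.
    move=> x; rewrite unfold_in => /asboolP [->|->] //; first [by case: (mn a a) | by case: (mn b b)].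
exists (fun a b : T => R a b /\ a <> b); split.
  move=> x; apply: NNPP => nA.
  have [|z [[Hz Hm] _]] := wR (fun x => `[< ~ Acc (fun a b : T => R a b /\ a <> b) x >]).
    by exists x; rewrite unfold_in; apply/asboolP.
  rewrite unfold_in in Hz; move/asboolP: Hz; apply; constructor => y [Ryz nyz].
  apply: NNPP => nAy; apply: nyz; apply: anti => //; apply: Hm.
  by rewrite unfold_in; apply/asboolP.
move=> a b nab; case: (mn a b) => H; [left|right]; split => //; auto.
Qed.
End WO.

From Stdlib Require Import Lra FunctionalExtensionality IndefiniteDescription Cantor.
Open Scope R_scope.

Lemma ord_le_refl : forall a, ord_le a a.
Proof.
  induction a.
  - apply ole_zero.
  - apply ole_succ; auto.
  - apply ole_limit; intro n; apply ole_cocone with n; auto.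
Qed.

Lemma ord_le_BL_inv : forall x c, ord_le x c -> forall g, x = BL g -> forall n, ord_le (g n) c.
Proof.
  intros x c H; induction H; intros g Eq n0; try discriminate.
  - apply ole_cocone with n. exact (IHord_le g Eq n0).
  - injection Eq; intro; subst; auto.
Qed.

Lemma ord_le_BS_inv : forall x c, ord_le x c -> forall b, x = BS b ->
  forall a, (forall c', ord_le b c' -> ord_le a c') -> ord_le (BS a) c.
Proof.
  intros x c H; induction H; intros b0 Eq a0 Ha; try discriminate.
  - injection Eq; intro; subst. apply ole_succ. apply Ha; auto.
  - apply ole_cocone with n. eapply IHord_le; eauto.
Qed.

Lemma ord_le_trans : forall a b c, ord_le a b -> ord_le b c -> ord_le a c.
Proof.
  intros a b c H; revert c; induction H; intros c Hc.
  - apply ole_zero.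
  - eapply ord_le_BS_inv; eauto.
  - apply IHord_le. exact (ord_le_BL_inv _ _ Hc f eq_refl n).
  - apply ole_limit; intro n; auto.
Qed.

Lemma not_BS_le_BZ : forall a, ~ ord_le (BS a) BZ.
Proof. intros a H; inversion H. Qed.

Lemma lt0_not_le0 : forall t, ord_lt BZ t -> ~ ord_le t BZ.
Proof. intros t H1 H2. apply (not_BS_le_BZ BZ). eapply ord_le_trans; eauto. Qed.

Lemma not_le0_lt0 : forall t, ~ ord_le t BZ -> ord_lt BZ t.
Proof.
  induction t; intro Hn.
  - exfalso; apply Hn, ole_zero.
  - apply ole_succ, ole_zero.
  - destruct (classic (forall n, ord_le (b n) BZ)) as [A|A].
    + exfalso; apply Hn, ole_limit; auto.
    + apply not_all_ex_not in A; destruct A as [n An].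
      apply ole_cocone with n; apply H; auto.
Qed.

Fixpoint pr (t : bord) (n : nat) : option bord :=
  match t with
  | BZ => None
  | BS s => Some s
  | BL h => pr (h (fst (of_nat n))) (snd (of_nat n))
  end.

Lemma pr_lt : forall t n c, pr t n = Some c -> ord_lt c t.
Proof.
  induction t as [|t IH|h IH]; intros n c E; simpl in E; try discriminate.
  - injection E; intro; subst. apply ord_le_refl.
  - apply ole_cocone with (fst (of_nat n)). eapply IH; eauto.
Qed.

Lemma pr_cof : forall t b, ord_lt b t -> exists n c, pr t n = Some c /\ ord_le b c.
Proof.
  induction t as [|t IH|h IH]; intros b0 Hl; unfold ord_lt in Hl.
  - inversion Hl.
  - inversion Hl; subst. exists 0%nat, t; split; auto.
  - inversion Hl; subst. destruct (IH n b0 H1) as [m [c [E L]]].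
    exists (to_nat (n, m)), c.
    change (pr (h (fst (of_nat (to_nat (n,m))))) (snd (of_nat (to_nat (n,m)))) = Some c /\ ord_le b0 c).
    rewrite cancel_of_to. simpl. auto.
Qed.

Lemma arch : forall e, 0 < e -> exists n : nat, / (INR n + 1) < e.
Proof.
  intros e He. destruct (INR_archimed e 1 He) as [n Hn].
  exists n. assert (0 < INR n + 1) by (pose proof (pos_INR n); lra).
  apply (Rmult_lt_reg_l (INR n + 1)); auto.
  rewrite Rinv_r by lra. nra.
Qed.

Lemma inv_pos : forall n : nat, 0 < / (INR n + 1).
Proof. intro n. apply Rinv_0_lt_compat. pose proof (pos_INR n); lra. Qed.

Section Cls.
Variable M : metric_space.

Lemma dist_nn : forall x y : M, 0 <= mdist x y.
Proof.
  intros x y. pose proof (mdist_tri M x y x). rewrite mdist_refl in H.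
  rewrite (mdist_sym M y x) in H. lra.
Qed.

Lemma open_ext : forall A B : M -> Prop, open_in M A -> (forall x, A x <-> B x) -> open_in M B.
Proof.
  intros A B HA E x Bx. destruct (HA x (proj2 (E x) Bx)) as [e [He H]].
  exists e; split; auto. intros y Hy; apply E; auto.
Qed.

Lemma ball_open : forall (c : M) r, open_in M (fun y => mdist c y < r).
Proof.
  intros c r x Hx. exists (r - mdist c x); split; [lra|].
  intros y Hy. pose proof (mdist_tri M c x y). lra.
Qed.

Lemma inball_closed : forall (A : M -> Prop) r,
  open_in M (fun x => ~ (forall y, mdist x y < r -> A y)).
Proof.
  intros A r x Hx. apply not_all_ex_not in Hx; destruct Hx as [y Hy].
  apply imply_to_and in Hy; destruct Hy as [Hd Hy].
  exists (r - mdist x y); split; [lra|].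
  intros x' Hx' H. apply Hy, H. pose proof (mdist_tri M x' x y).
  rewrite (mdist_sym M x' x) in H0. lra.
Qed.

Lemma open_union2 : forall A B : M -> Prop, open_in M A -> open_in M B ->
  open_in M (fun x => A x \/ B x).
Proof.
  intros A B HA HB x [Hx|Hx].
  - destruct (HA x Hx) as [e [He H]]; exists e; split; auto.
  - destruct (HB x Hx) as [e [He H]]; exists e; split; auto.
Qed.

Notation opn := (open_in M).

Lemma add_ext : forall a (A B : M -> Prop), additive_class opn a A ->
  (forall x, A x <-> B x) -> additive_class opn a B.
Proof.
  intros a A B H E; destruct H.
  - apply add_class_zero; auto. eapply open_ext; eauto.
  - apply add_class_union with An b; auto.
    intro x; rewrite <- E; auto.
Qed.

Lemma open_add : forall b (A : M -> Prop), opn A -> additive_class opn b A.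
Proof.
  intros b A HA. destruct (classic (ord_le b BZ)) as [Hb|Hb].
  - apply add_class_zero; auto.
  - apply not_le0_lt0 in Hb.
    apply add_class_union with (fun n x => forall y, mdist x y < / (INR n + 1) -> A y)
      (fun _ => BZ); auto.
    + intro n; apply add_class_zero; [apply ole_zero|]. apply inball_closed.
    + intro x; split.
      * intro Ax. destruct (HA x Ax) as [e [He H]]. destruct (arch e He) as [n Hn].
        exists n; intros y Hy; apply H; lra.
      * intros [n Hn]. apply Hn. rewrite mdist_refl. apply inv_pos.
Qed.

Lemma add_zero_inv : forall b (A : M -> Prop), ord_le b BZ -> additive_class opn b A -> opn A.
Proof.
  intros b A Hb H; destruct H; auto. exfalso; eapply lt0_not_le0; eauto.
Qed.

Lemma add_mono : forall b c (A : M -> Prop), ord_le b c -> additive_class opn b A ->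
  additive_class opn c A.
Proof.
  intros b c A Hbc H; destruct H as [a0 A0 Ha HA | a0 A0 An bb Hlt Hbb Hc Hiff].
  - apply open_add; auto.
  - apply add_class_union with An bb; auto.
    + exact (ord_le_trans _ _ _ Hlt Hbc).
    + intro n; exact (ord_le_trans _ _ _ (Hbb n) Hbc).
Qed.

Lemma add_inv_ge1 : forall b (A : M -> Prop), ord_lt BZ b -> additive_class opn b A ->
  exists p : (nat -> M -> Prop) * (nat -> bord),
    (forall m, ord_lt (snd p m) b) /\
    (forall m, additive_class opn (snd p m) (fun x => ~ fst p m x)) /\
    (forall x, A x <-> exists m, fst p m x).
Proof.
  intros b A Hb H; destruct H.
  - exfalso; eapply lt0_not_le0; eauto.
  - exists (An, b); simpl; auto.
Qed.

Lemma add_countable : forall b (A : nat -> M -> Prop), ord_lt BZ b ->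
  (forall n, additive_class opn b (A n)) -> additive_class opn b (fun x => exists n, A n x).
Proof.
  intros b A Hb HA.
  destruct (functional_choice _ (fun n => add_inv_ge1 b (A n) Hb (HA n))) as [F HF].
  apply add_class_union with
    (fun q => fst (F (fst (of_nat q))) (snd (of_nat q)))
    (fun q => snd (F (fst (of_nat q))) (snd (of_nat q))); auto.
  - intro q; apply (HF (fst (of_nat q))).
  - intro q; apply (HF (fst (of_nat q))).
  - intro x; split.
    + intros [n Hn]. apply (HF n) in Hn. destruct Hn as [m Hm].
      exists (to_nat (n, m)). rewrite cancel_of_to; simpl; auto.
    + intros [q Hq]. exists (fst (of_nat q)). apply (HF _). eauto.
Qed.

Lemma add_union2 : forall b (A B : M -> Prop), additive_class opn b A ->
  additive_class opn b B -> additive_class opn b (fun x => A x \/ B x).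
Proof.
  intros b A B HA HB. destruct (classic (ord_le b BZ)) as [Hb|Hb].
  - apply add_class_zero; auto. apply open_union2; eapply add_zero_inv; eauto.
  - apply not_le0_lt0 in Hb.
    apply add_ext with (fun x => exists n, (match n with O => A | _ => B end) x).
    + apply add_countable; auto. intros [|n]; auto.
    + intro x; split.
      * intros [[|n] H]; auto.
      * intros [H|H]; [exists O|exists 1%nat]; auto.
Qed.

End Cls.

Lemma add_opn_mono : forall (T : Type) (o1 o2 : (T -> Prop) -> Prop),
  (forall A, o1 A -> o2 A) -> forall a A, additive_class o1 a A -> additive_class o2 a A.
Proof.
  intros T o1 o2 Ho a A H; induction H.
  - apply add_class_zero; auto.
  - apply add_class_union with An b; auto.
Qed.

Section Prod.
Variables X Y : metric_space.

Definition pdist (p q : (X * Y)%type) : R := Rmax (mdist (fst p) (fst q)) (mdist (snd p) (snd q)).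

Lemma pdist_refl : forall p, pdist p p = 0.
Proof. intro p; unfold pdist; rewrite !mdist_refl. unfold Rmax; destruct Rle_dec; auto. Qed.

Lemma pdist_sep : forall p q, pdist p q = 0 -> p = q.
Proof.
  intros [x y] [x' y'] H; unfold pdist in H; simpl in H.
  pose proof (dist_nn X x x'); pose proof (dist_nn Y y y').
  pose proof (Rmax_l (mdist x x') (mdist y y')); pose proof (Rmax_r (mdist x x') (mdist y y')).
  rewrite (mdist_sep X x x') by lra. rewrite (mdist_sep Y y y') by lra. auto.
Qed.

Lemma pdist_sym : forall p q, pdist p q = pdist q p.
Proof. intros p q; unfold pdist; rewrite (mdist_sym X), (mdist_sym Y); auto. Qed.

Lemma pdist_tri : forall p q r, pdist p r <= pdist p q + pdist q r.
Proof.
  intros p q r; unfold pdist.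
  pose proof (mdist_tri X (fst p) (fst q) (fst r)).
  pose proof (mdist_tri Y (snd p) (snd q) (snd r)).
  pose proof (Rmax_l (mdist (fst p) (fst q)) (mdist (snd p) (snd q))).
  pose proof (Rmax_r (mdist (fst p) (fst q)) (mdist (snd p) (snd q))).
  pose proof (Rmax_l (mdist (fst q) (fst r)) (mdist (snd q) (snd r))).
  pose proof (Rmax_r (mdist (fst q) (fst r)) (mdist (snd q) (snd r))).
  apply Rmax_lub; lra.
Qed.

Definition XY : metric_space := @MetricSpace (X * Y)%type pdist pdist_refl pdist_sep pdist_sym pdist_tri.

Lemma XY_prod_open : forall W, open_in XY W -> prod_open X Y W.
Proof.
  intros W HW x y Hw. destruct (HW (x, y) Hw) as [e [He H]].
  exists e; split; auto. intros x' y' H1 H2. apply (H (x', y')).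
  simpl; unfold pdist; simpl. apply Rmax_lub_lt; auto.
Qed.

Lemma XY_dist_fst : forall p q : XY, mdist (fst p) (fst q) <= mdist p q.
Proof. intros; simpl; unfold pdist; apply Rmax_l. Qed.
Lemma XY_dist_snd : forall p q : XY, mdist (snd p) (snd q) <= mdist p q.
Proof. intros; simpl; unfold pdist; apply Rmax_r. Qed.

Lemma open_snd : forall O : Y -> Prop, open_in Y O -> open_in XY (fun p => O (snd p)).
Proof.
  intros O HO p Hp. destruct (HO _ Hp) as [e [He H]]. exists e; split; auto.
  intros q Hq. apply H. pose proof (XY_dist_snd p q). lra.
Qed.

(** * Unions over separated families *)
Definition sep {J : Type} (d : R) (C : J -> Y -> Prop) : Prop :=
  forall i j y y', C i y -> C j y' -> mdist y y' < d -> i = j.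

Definition MultL (b : bord) : Prop :=
  forall (J : Type) (S : J -> X -> Prop) (C : J -> Y -> Prop) (d : R),
    0 < d -> sep d C -> (forall j, closed_in Y (C j)) ->
    (forall j, multiplicative_class (open_in X) b (S j)) ->
    multiplicative_class (open_in XY) b (fun p : XY => exists j, S j (fst p) /\ C j (snd p)).

Definition AddCL (b : bord) : Prop :=
  forall (J : Type) (S : J -> X -> Prop) (C : J -> Y -> Prop) (d : R),
    0 < d -> sep d C -> (forall j, closed_in Y (C j)) ->
    (forall j, additive_class (open_in X) b (S j)) ->
    additive_class (open_in XY) b (fun p : XY => exists j, S j (fst p) /\ C j (snd p)).

Definition AddOL (b : bord) : Prop :=
  forall (J : Type) (S : J -> X -> Prop) (C : J -> Y -> Prop) (d : R),
    0 < d -> sep d C -> (forall j, open_in Y (C j)) ->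
    (forall j, additive_class (open_in X) b (S j)) ->
    additive_class (open_in XY) b (fun p : XY => exists j, S j (fst p) /\ C j (snd p)).

Definition QL (b : bord) : Prop := forall p c, pr b p = Some c -> MultL c.

Section AddC.
Variable b : bord.
Variables (J : Type) (F : J -> (nat -> X -> Prop) * (nat -> bord)).

Definition Mp (j : J) (q : nat) (x : X) : Prop :=
  (exists c, pr b (snd (of_nat q)) = Some c /\ ord_le (snd (F j) (fst (of_nat q))) c) /\
  fst (F j) (fst (of_nat q)) x.

Definition lev (q : nat) : bord :=
  match pr b (snd (of_nat q)) with Some c => c | None => BZ end.
End AddC.

Lemma addC_of_Q : forall b, QL b -> ord_lt BZ b -> AddCL b.
Proof.
  intros b HQ Hb J S C d Hd Hsep Hcl HS.
  destruct (functional_choice _ (fun j => add_inv_ge1 X b (S j) Hb (HS j))) as [F HF].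
  apply add_class_union with
    (fun q (p : XY) => exists j, Mp b J F j q (fst p) /\ C j (snd p)) (lev b); auto.
  - intro q; unfold lev. destruct (pr b (snd (of_nat q))) as [c|] eqn:E; auto.
    eapply pr_lt; eauto.
  - intro q. change (multiplicative_class (open_in XY) (lev b q)
        (fun p : XY => exists j, Mp b J F j q (fst p) /\ C j (snd p))).
    unfold lev. destruct (pr b (snd (of_nat q))) as [c|] eqn:E.
    + apply (HQ _ c E J (fun j => Mp b J F j q) C d); auto.
      intro j. unfold multiplicative_class.
      destruct (classic (ord_le (snd (F j) (fst (of_nat q))) c)) as [Hl|Hl].
      * apply add_ext with (fun x => ~ fst (F j) (fst (of_nat q)) x).
        -- apply add_mono with (snd (F j) (fst (of_nat q))); auto. apply HF.
        -- intro x; unfold Mp; split.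
           ++ intros H1 [_ H2]; auto.
           ++ intros H1 H2; apply H1; split; eauto.
      * apply open_add. intros x Hx. exists 1; split; [lra|].
        intros y _ [[c' [E' Hl']] _]. rewrite E in E'. injection E'; intro; subst; auto.
    + apply add_class_zero; [apply ole_zero|].
      intros p _. exists 1; split; [lra|].
      intros p' _ [j [[[c' [E' _]] _] _]]. rewrite E in E'; discriminate.
  - intro p; split.
    + intros [j [Hs Hc]]. apply (HF j) in Hs. destruct Hs as [m Hm].
      destruct (pr_cof b (snd (F j) m)) as [n [c [E Hle]]]. { apply HF. }
      exists (to_nat (m, n)), j. unfold Mp. rewrite cancel_of_to; simpl.
      split; auto. split; eauto.
    + intros [q [j [[_ Hm] Hc]]]. exists j; split; auto. apply (HF j). eauto.
Qed.

Lemma addO_of_Q : forall b, QL b -> AddOL b.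
Proof.
  intros b HQ J S C d Hd Hsep Hop HS.
  destruct (classic (ord_le b BZ)) as [Hb|Hb].
  - apply add_class_zero; auto.
    intros p [j [Hs Hc]].
    destruct (add_zero_inv X b (S j) Hb (HS j) _ Hs) as [e1 [He1 H1]].
    destruct (Hop j _ Hc) as [e2 [He2 H2]].
    exists (Rmin e1 e2); split; [apply Rmin_glb_lt; auto|].
    intros q Hq. pose proof (Rmin_l e1 e2); pose proof (Rmin_r e1 e2).
    pose proof (XY_dist_fst p q); pose proof (XY_dist_snd p q).
    exists j; split; [apply H1|apply H2]; lra.
  - apply not_le0_lt0 in Hb.
    apply add_ext with (fun p : XY => exists m, exists j, S j (fst p) /\
       (fun y => forall y', mdist y y' < / (INR m + 1) -> C j y') (snd p)).
    + apply add_countable; auto. intro m.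
      apply (addC_of_Q b HQ Hb J S (fun j y => forall y', mdist y y' < / (INR m + 1) -> C j y') d); auto.
      * intros i j y y' H1 H2 H3. apply (Hsep i j y y'); [apply H1|apply H2|auto];
          rewrite mdist_refl; apply inv_pos.
      * intro j. apply inball_closed.
    + intro p; split.
      * intros [m [j [H1 H2]]]. exists j; split; auto. apply H2. rewrite mdist_refl; apply inv_pos.
      * intros [j [H1 H2]]. destruct (Hop j _ H2) as [e [He H]].
        destruct (arch e He) as [m Hm]. exists m, j; split; auto.
        intros y' Hy'; apply H; lra.
Qed.

Lemma union_sep_closed : forall (J : Type) (C : J -> Y -> Prop) d, 0 < d -> sep d C ->
  (forall j, closed_in Y (C j)) -> open_in Y (fun y => ~ exists j, C j y).
Proof.
  intros J C d Hd Hsep Hcl y Hy.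
  destruct (classic (exists j y1, C j y1 /\ mdist y y1 < d / 2)) as [[j [y1 [H1 H2]]]|Hn].
  - assert (Hy' : ~ C j y) by (intro; apply Hy; eauto).
    destruct (Hcl j y Hy') as [e [He H]].
    exists (Rmin e (d/2)); split; [apply Rmin_glb_lt; lra|].
    intros y' Hy'' [i Hi]. pose proof (Rmin_l e (d/2)); pose proof (Rmin_r e (d/2)).
    assert (i = j).
    { apply (Hsep i j y' y1); auto. pose proof (mdist_tri Y y' y y1) as T.
      rewrite (mdist_sym Y y' y) in T. lra. }
    subst. apply (H y'); auto. lra.
  - exists (d/2); split; [lra|]. intros y' Hy' [j Hj]. apply Hn; eauto.
Qed.

Lemma mult_of_Q : forall b, QL b -> MultL b.
Proof.
  intros b HQ J S C d Hd Hsep Hcl HS. unfold multiplicative_class.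
  set (N := fun j y => exists y', C j y' /\ mdist y y' < d / 3).
  apply add_ext with (fun p : XY => (exists j, (fun x => ~ S j x) (fst p) /\ N j (snd p))
                                    \/ (fun y => ~ exists j, C j y) (snd p)).
  - apply add_union2.
    + apply (addO_of_Q b HQ J (fun j x => ~ S j x) N (d / 3)); auto.
      * lra.
      * intros i j y y' [ci [Hi Di]] [cj [Hj Dj]] D.
        apply (Hsep i j ci cj Hi Hj).
        pose proof (mdist_tri Y ci y y') as T1; pose proof (mdist_tri Y ci y' cj) as T2.
        rewrite (mdist_sym Y ci y) in T1. lra.
      * intros j y [c [Hc Dc]]. exists (d / 3 - mdist y c); split; [lra|].
        intros y' Hy'. exists c; split; auto.
        pose proof (mdist_tri Y y' y c) as T. rewrite (mdist_sym Y y' y) in T. lra.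
    + apply open_add. apply (open_snd (fun y => ~ exists j, C j y)). apply (union_sep_closed J C d); auto.
  - intros [x y]; simpl; split.
    + intros [[j [Hs [c [Hc Dc]]]]|Hn] [i [Hsi Hci]].
      * assert (i = j). { apply (Hsep i j y c); auto. lra. }
        subst; auto.
      * apply Hn; eauto.
    + intro H. destruct (classic (exists j, C j y)) as [[j Hj]|Hn].
      * left. exists j; split.
        -- intro Hs; apply H; eauto.
        -- exists y; split; auto. rewrite mdist_refl; lra.
      * right; auto.
Qed.

Lemma Q_all : forall t, QL t.
Proof.
  induction t as [|t IH|h IH]; intros p c E; simpl in E.
  - discriminate.
  - injection E; intro; subst. apply mult_of_Q; auto.
  - exact (IH _ _ _ E).
Qed.

End Prod.

(** * Transfinite exhaustion from PECP *)
Section Decomp.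
Variables (X Y Z : metric_space) (f : (X * Y)%type -> Z) (eps : R).
Variable lt : (Y -> Prop) -> (Y -> Prop) -> Prop.
Hypothesis wf : well_founded lt.
Hypothesis tot : forall a b, a <> b -> lt a b \/ lt b a.
Variable ch : (Y -> Prop) -> ((Y -> Prop) * Y)%type.
Hypothesis ch_open : forall G, open_in Y (fst (ch G)).
Hypothesis ch_new : forall G, open_in Y G -> (exists y, ~ G y) -> exists y, fst (ch G) y /\ ~ G y.
Hypothesis ch_thin : forall G y x, fst (ch G) y -> ~ G y ->
  mdist (f (x, y)) (f (x, snd (ch G))) < eps.

Definition Wrec : (Y -> Prop) -> (Y -> Prop) :=
  Fix wf (fun _ => Y -> Prop)
    (fun U rec => fst (ch (fun y => exists U' (H : lt U' U), rec U' H y))).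

Definition Gs (U : Y -> Prop) : Y -> Prop := fun y => exists U' (H : lt U' U), Wrec U' y.

Lemma Wrec_eq : forall U, Wrec U = fst (ch (Gs U)).
Proof.
  intro U. unfold Wrec at 1. rewrite Fix_eq.
  - reflexivity.
  - intros x f1 g1 H.
    assert (f1 = g1) as E.
    { apply functional_extensionality_dep; intro y.
      apply functional_extensionality_dep; intro p. apply H. }
    rewrite E; reflexivity.
Qed.

Lemma Wrec_open : forall U, open_in Y (Wrec U).
Proof. intro U; rewrite Wrec_eq; auto. Qed.

Lemma Gs_open : forall U, open_in Y (Gs U).
Proof.
  intros U y [U' [H Hw]]. destruct (Wrec_open U' y Hw) as [e [He Hb]].
  exists e; split; auto. intros y' Hy'. exists U', H; auto.
Qed.

Lemma Wrec_cover : forall y, exists U, Wrec U y.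
Proof.
  intro y. destruct (classic (exists U, forall y, Gs U y)) as [[U HU]|Hn].
  - destruct (HU y) as [U' [_ H]]; eauto.
  - exfalso.
    assert (Hh : forall U, exists z, Wrec U z /\ ~ Gs U z).
    { intro U. rewrite Wrec_eq. apply ch_new; [apply Gs_open|].
      apply not_all_ex_not. intro H; apply Hn; eauto. }
    destruct (functional_choice _ Hh) as [h Hh'].
    assert (inj : forall U1 U2, h U1 = h U2 -> U1 = U2).
    { intros U1 U2 E. destruct (classic (U1 = U2)) as [|Ne]; auto.
      destruct (tot U1 U2 Ne) as [L|L].
      - exfalso. apply (proj2 (Hh' U2)). rewrite <- E. exists U1, L. apply Hh'.
      - exfalso. apply (proj2 (Hh' U1)). rewrite E. exists U2, L. apply Hh'. }
    set (D := fun z => exists U, h U = z /\ ~ U z).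
    destruct (classic (D (h D))) as [Hd|Hd].
    + destruct Hd as [U [E HU]]. assert (U = D) by (apply inj; auto). subst U.
      apply HU. exists D; split; [reflexivity | exact HU].
    + apply Hd. exists D; split; auto.
Qed.

Lemma Wrec_min : forall y U, Wrec U y -> exists U0, Wrec U0 y /\ ~ Gs U0 y.
Proof.
  intros y U; induction U as [U IH] using (well_founded_ind wf); intro Hw.
  destruct (classic (Gs U y)) as [[U' [L H]]|Hn].
  - apply (IH U' L H).
  - eauto.
Qed.

Definition Pc (n : nat) (U : Y -> Prop) : Y -> Prop :=
  fun y => ~ Gs U y /\ forall y', mdist y y' < / (INR n + 1) -> Wrec U y'.

Lemma Pc_closed : forall n U, closed_in Y (Pc n U).
Proof.
  intros n U. unfold closed_in.
  apply open_ext with (fun y => Gs U y \/ ~ (forall y', mdist y y' < / (INR n + 1) -> Wrec U y')).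
  - apply open_union2; [apply Gs_open|apply inball_closed].
  - intro y; unfold Pc; split.
    + intros [H|H] [H1 H2]; auto.
    + intro H. destruct (classic (Gs U y)); [left; auto|].
      right; intro H2; apply H; split; auto.
Qed.

Lemma Pc_sep : forall n, sep Y (/ (INR n + 1)) (Pc n).
Proof.
  intros n U1 U2 y y' [G1 B1] [G2 B2] D.
  destruct (classic (U1 = U2)) as [|Ne]; auto. exfalso.
  destruct (tot U1 U2 Ne) as [L|L].
  - apply G2. exists U1, L. apply B1; auto.
  - apply G1. exists U2, L. apply B2. rewrite mdist_sym; auto.
Qed.

Lemma Pc_cover : forall y, exists n U, Pc n U y.
Proof.
  intro y. destruct (Wrec_cover y) as [U HU]. destruct (Wrec_min y U HU) as [U0 [H1 H2]].
  destruct (Wrec_open U0 y H1) as [e [He H]]. destruct (arch e He) as [n Hn].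
  exists n, U0; split; auto. intros y' Hy'; apply H; lra.
Qed.

Lemma Pc_thin : forall n U y x, Pc n U y -> mdist (f (x, y)) (f (x, snd (ch (Gs U)))) < eps.
Proof.
  intros n U y x [G B]. apply ch_thin; auto. rewrite <- Wrec_eq. apply B.
  rewrite mdist_refl; apply inv_pos.
Qed.

End Decomp.

Lemma decomp : forall (X Y Z : metric_space) (f : (X * Y)%type -> Z) (eps : R),
  0 < eps ->
  PECP (fun g : Y -> Z => exists x : X, g = (fun y => f (x, y))) ->
  forall ystar : Y,
  exists CC : (nat -> (Y -> Prop) -> Y -> Prop) * ((Y -> Prop) -> Y),
    (forall n j, closed_in Y (fst CC n j)) /\
    (forall n, sep Y (/ (INR n + 1)) (fst CC n)) /\
    (forall y, exists n j, fst CC n j y) /\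
    (forall n j y x, fst CC n j y -> mdist (f (x, y)) (f (x, snd CC j)) < eps).
Proof.
  intros X Y Z f eps He Hp ystar.
  destruct (WO.wo_exists (Y -> Prop)) as [lt [wf tot]].
  assert (Hch : forall G : Y -> Prop, exists wc : ((Y -> Prop) * Y)%type,
    open_in Y (fst wc) /\
    (open_in Y G -> (exists y, ~ G y) -> exists y, fst wc y /\ ~ G y) /\
    (forall y x, fst wc y -> ~ G y -> mdist (f (x, y)) (f (x, snd wc)) < eps)).
  { intro G. destruct (classic (open_in Y G /\ exists y, ~ G y)) as [[HG Hne]|Hn].
    - assert (Hcl : closed_in Y (fun y => ~ G y)).
      { unfold closed_in. apply open_ext with G; auto.
        intro y; split; intro H; [intro H'; auto| apply NNPP; auto]. }
      destruct (Hp _ Hne Hcl) as [y0 [Fy0 Heq]].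
      destruct (Heq eps He) as [U [[e [Pe HU]] Hth]].
      exists (fun y => mdist y0 y < e, y0); simpl; split; [apply ball_open|split].
      + intros _ _. exists y0; split; auto. rewrite mdist_refl; auto.
      + intros y x Hy Gy. apply (Hth y (fun y => f (x, y))); auto. exists x; auto.
    - exists (fun _ => False, ystar); simpl; split; [|split].
      + intros y [].
      + intros H1 H2; exfalso; auto.
      + intros y x [].
  }
  destruct (functional_choice _ Hch) as [ch Hc].
  exists (Pc Y lt wf ch, fun U => snd (ch (Gs Y lt wf ch U))); simpl.
  split; [|split; [|split]].
  - intros; apply Pc_closed; intro G; apply Hc.
  - intro n; apply Pc_sep; auto.
  - intro y; apply Pc_cover; auto.
    + intro G; apply Hc.
    + intros G HG Hne; apply Hc; auto.
  - intros n j y x H. eapply (Pc_thin X Y Z f eps lt wf ch); eauto.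
    intros G y' x'; apply Hc.
Qed.

Theorem corollary3p20 (X Y Z : metric_space) (alpha : bord)
  (f : X * Y -> Z) :
  ord_le (BS BZ) alpha ->
  PECP (fun g : Y -> Z => exists x : X, g = (fun y => f (x, y))) ->
  (forall y : Y, borel_class (open_in X) Z alpha (fun x => f (x, y))) ->
  borel_class (@prod_open X Y) Z alpha f.
Proof.
  intros Ha Hp Hy Uo HUo.
  apply add_opn_mono with (open_in (XY X Y)); [apply XY_prod_open|].
  destruct (classic (exists y : Y, True)) as [[ystar _]|HY].
  2:{ apply open_add. intros [x y]; exfalso; apply HY; eauto. }
  assert (Hd : forall k : nat, exists CC : (nat -> (Y -> Prop) -> Y -> Prop) * ((Y -> Prop) -> Y),
    (forall n j, closed_in Y (fst CC n j)) /\
    (forall n, sep Y (/ (INR n + 1)) (fst CC n)) /\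
    (forall y, exists n j, fst CC n j y) /\
    (forall n j y x, fst CC n j y -> mdist (f (x, y)) (f (x, snd CC j)) < / (INR k + 1))).
  { intro k. apply decomp; auto. apply inv_pos. }
  destruct (functional_choice _ Hd) as [D HD].
  set (Ok := fun (k : nat) (z : Z) => exists eta, 0 < eta /\
          forall w, mdist z w < / (INR k + 1) + eta -> Uo w).
  assert (Okopen : forall k, open_in Z (Ok k)).
  { intros k z [eta [He H]]. exists (eta / 2); split; [lra|].
    intros z' Hz'. exists (eta / 2); split; [lra|]. intros w Hw. apply H.
    pose proof (mdist_tri Z z z' w). lra. }
  apply add_ext with (fun p : XY X Y => exists q, exists j,
      (fun x => Ok (fst (of_nat q)) (f (x, snd (D (fst (of_nat q))) j))) (fst p) /\
      fst (D (fst (of_nat q))) (snd (of_nat q)) j (snd p)).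
  - apply add_countable; auto. intro q.
    destruct (HD (fst (of_nat q))) as [H1 [H2 [H3 H4]]].
    apply (addC_of_Q X Y alpha (Q_all X Y alpha) Ha (Y -> Prop)
      (fun j x => Ok (fst (of_nat q)) (f (x, snd (D (fst (of_nat q))) j)))
      (fst (D (fst (of_nat q))) (snd (of_nat q))) (/ (INR (snd (of_nat q)) + 1)));
      auto.
    + apply inv_pos.
    + intro j. apply (Hy (snd (D (fst (of_nat q))) j) (Ok (fst (of_nat q)))). auto.
  - intros [x y]; simpl; split.
    + intros [q [j [[eta [He H]] Hc]]]. apply H.
      destruct (HD (fst (of_nat q))) as [_ [_ [_ H4]]].
      pose proof (H4 _ _ _ x Hc). rewrite mdist_sym in H0. lra.
    + intro Hu. destruct (HUo _ Hu) as [e [He H]].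
      destruct (arch (e / 3)) as [k Hk]; [lra|].
      destruct (HD k) as [_ [_ [H3 H4]]]. destruct (H3 y) as [n [j Hc]].
      exists (to_nat (k, n)), j. rewrite cancel_of_to; simpl. split; auto.
      exists (/ (INR k + 1)); split; [apply inv_pos|].
      intros w Hw. apply H. pose proof (H4 _ _ _ x Hc).
      pose proof (mdist_tri Z (f (x, y)) (f (x, snd (D k) j)) w). lra.
Qed.
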